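(* There is an absolute constant $c>0$ such that the following holds. Let $\mathbf T$ be a size-$s$ stochastic decision tree over $\{0,1\}^n$. For every $\varepsilon\in(0,1/2)$ there is a stochastic-leaf decision tree $\overline{\mathbf T}$ of size $S\le s^{c/\varepsilon^2}$ such that $\mathbb{E}_{\mathbf x}\big[|\mu_{\mathbf T}(\mathbf x)-\mu_{\overline{\mathbf T}}(\mathbf x)|\big]\le\varepsilon$, where $\mathbf x$ is uniform on $\{0,1\}^n$.
   Context: A stochastic decision tree (DT) $\mathbf{T}$ over $\{0,1\}^n$ is a rooted binary tree whose internal nodes are either deterministic nodes, each labeled by a variable $x_i$ ($i\in[n]$) with one outgoing edge followed when $x_i=0$ and one when $x_i=1$, or stochastic nodes, each with two outgoing edges followed with probabilities $p$ and $1-p$ (for a node-specific $p\in[0,1]$, using fresh independent randomness at each node), and whose leaves are labeled $0$ or $1$. On input $x$, $\mathbf{T}(x)$ is the (random) label of the leaf reached. The size of a DT is its number of leaves. A stochastic-leaf DT is a stochastic DT in which every stochastic node has only leaves as its children. The mean function of $\mathbf T$ is $\mu_{\mathbf T}(x)=\Pr[\mathbf T(x)=1]$. *)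

(* Defs.v *)
From HB Require Import structures.
From mathcomp Require Import all_boot all_order all_algebra.
From mathcomp Require Import all_classical all_reals.
From Stdlib Require Import Rdefinitions.
From mathcomp Require Import Rstruct exp.
Set Implicit Arguments. Unset Strict Implicit. Unset Printing Implicit Defensive.
Import Order.TTheory GRing.Theory Num.Theory.
Local Open Scope ring_scope.

Inductive sdt (n : nat) : Type :=
| Leaf of bool
| DNode of 'I_n & sdt n & sdt n         (* query x_i: first subtree if x_i = 0, second if x_i = 1 *)
| SNode of R & sdt n & sdt n.           (* stochastic: first subtree w.p. p, second w.p. 1-p *)

Arguments Leaf {n}.

Fixpoint sdt_valid n (T : sdt n) : bool :=
  match T with
  | Leaf _ => true
  | DNode _ T0 T1 => sdt_valid T0 && sdt_valid T1
  | SNode p T0 T1 => [&& 0 <= p, p <= 1, sdt_valid T0 & sdt_valid T1]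
  end.

Fixpoint sdt_size n (T : sdt n) : nat :=
  match T with
  | Leaf _ => 1
  | DNode _ T0 T1 => sdt_size T0 + sdt_size T1
  | SNode _ T0 T1 => sdt_size T0 + sdt_size T1
  end.

Definition is_leaf n (T : sdt n) : bool := if T is Leaf _ then true else false.

Fixpoint stochastic_leaf n (T : sdt n) : bool :=
  match T with
  | Leaf _ => true
  | DNode _ T0 T1 => stochastic_leaf T0 && stochastic_leaf T1
  | SNode _ T0 T1 => is_leaf T0 && is_leaf T1
  end.

(* mean function mu_T(x) = Pr[T(x) = 1], fresh independent randomness at each node *)
Fixpoint sdt_mean n (T : sdt n) (x : {ffun 'I_n -> bool}) : R :=
  match T with
  | Leaf b => (b : nat)%:R
  | DNode i T0 T1 => if x i then sdt_mean T1 x else sdt_mean T0 x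
  | SNode p T0 T1 => p * sdt_mean T0 x + (1 - p) * sdt_mean T1 x
  end.

Definition mean_dist n (T T' : sdt n) : R :=
  (2 ^+ n)^-1 * \sum_(x : {ffun 'I_n -> bool}) `|sdt_mean T x - sdt_mean T' x|.

(* Main.v *)
Require Import Defs.
From HB Require Import structures.
From mathcomp Require Import all_boot all_order all_algebra.
From mathcomp Require Import all_classical all_reals.
From Stdlib Require Import Rdefinitions.
From mathcomp Require Import Rstruct exp.
From mathcomp Require Import ring lra.
Import Order.TTheory GRing.Theory Num.Theory.
Local Open Scope ring_scope.
Set Implicit Arguments. Unset Strict Implicit.

Fixpoint det n (T : sdt n) : bool :=
  match T with Leaf _ => true | DNode _ a b => det a && det b | SNode _ _ _ => false end.

Fixpoint deval n (T : sdt n) (x : {ffun 'I_n -> bool}) : bool :=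
  match T with Leaf b => b | DNode i a b => if x i then deval b x else deval a x
  | SNode _ a _ => deval a x end.

Fixpoint reals n (T : sdt n) : seq (R * sdt n) :=
  match T with
  | Leaf b => [:: (1, Leaf b)]
  | DNode i T0 T1 => flatten [seq [seq (a.1 * b.1, DNode i a.2 b.2) | b <- reals T1] | a <- reals T0]
  | SNode p T0 T1 => [seq (p * a.1, a.2) | a <- reals T0] ++ [seq ((1-p) * a.1, a.2) | a <- reals T1]
  end.

Definition rgood n (s : nat) (r : R * sdt n) : bool :=
  [&& 0 <= r.1, det r.2 & leq (sdt_size r.2) s].

Lemma rgood_mono n (s s' : nat) (r : R * sdt n) : leq s s' -> rgood s r -> rgood s' r.
Proof. by move=> h /and3P[a b h2]; rewrite /rgood a b (leq_trans h2 h). Qed.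

Lemma all_mono T (P Q : pred T) (l : seq T) : (forall x, P x -> Q x) -> all P l -> all Q l.
Proof. by move=> h; elim: l => //= a l IH /andP[/h -> /IH]. Qed.

Lemma all_flattenE T (p : pred T) (l : seq (seq T)) : all p (flatten l) = all (all p) l.
Proof. by elim: l => //= a l IH; rewrite all_cat IH. Qed.

Lemma reals_good n (T : sdt n) : sdt_valid T -> all (rgood (sdt_size T)) (reals T).
Proof.
elim: T => [b|i T0 IH0 T1 IH1|p T0 IH0 T1 IH1] /=.
- by move=> _; rewrite /rgood /= ler01.
- move=> /andP[/IH0 h0 /IH1 h1]; rewrite all_flattenE all_map.
  apply: (all_mono _ h0) => a /and3P[a1 a2 a3] /=; rewrite all_map.
  apply: (all_mono _ h1) => b /and3P[b1 b2 b3] /=.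
  by rewrite /rgood /= mulr_ge0 // a2 b2 leq_add.
- move=> /and4P[p0 p1 /IH0 h0 /IH1 h1]; rewrite all_cat !all_map.
  apply/andP; split.
  + apply: all_mono h0 => a /and3P[a1 a2 a3].
    by rewrite /rgood /= mulr_ge0 // a2 (leq_trans a3) // leq_addr.
  + apply: all_mono h1 => a /and3P[a1 a2 a3].
    by rewrite /rgood /= mulr_ge0 ?subr_ge0 // a2 (leq_trans a3) // leq_addl.
Qed.

Lemma reals_sum n (T : sdt n) : \sum_(r <- reals T) r.1 = 1.
Proof.
elim: T => [b|i T0 IH0 T1 IH1|p T0 IH0 T1 IH1] /=.
- by rewrite big_seq1.
- rewrite big_flatten big_map /=. rewrite -IH0.
  apply: eq_bigr => a _; rewrite big_map /= -mulr_sumr IH1 mulr1 //.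
- by rewrite big_cat !big_map /= -!mulr_sumr IH0 IH1; ring.
Qed.

Lemma reals_mean n (T : sdt n) x :
  \sum_(r <- reals T) r.1 * sdt_mean r.2 x = sdt_mean T x.
Proof.
elim: T => [b|i T0 IH0 T1 IH1|p T0 IH0 T1 IH1] /=.
- by rewrite big_seq1 mul1r.
- rewrite big_flatten big_map /=.
  under eq_bigr do rewrite big_map /=.
  case: (x i).
  + transitivity (\sum_(a <- reals T0) a.1 * sdt_mean T1 x).
      apply: eq_bigr => a _; rewrite -IH1 mulr_sumr.
      by apply: eq_bigr => b _; rewrite mulrA.
    by rewrite -mulr_suml reals_sum mul1r.
  + rewrite -IH0; apply: eq_bigr => a _.
    transitivity (\sum_(b <- reals T1) a.1 * sdt_mean a.2 x * b.1).
      by apply: eq_bigr => b _; rewrite mulrAC.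
    by rewrite -mulr_sumr reals_sum mulr1.
- rewrite big_cat !big_map -IH0 -IH1 !big_distrr; congr (_ + _);
  by apply: eq_bigr => a _; rewrite /= -mulrA.
Qed.

Lemma mean_bounds n (T : sdt n) x : sdt_valid T -> 0 <= sdt_mean T x <= 1.
Proof.
elim: T => [b|i T0 IH0 T1 IH1|p T0 IH0 T1 IH1] /=.
- by case: b => _ /=; rewrite ?mulr1n ?mulr0n ?ler01 ?lexx.
- by move=> /andP[/IH0 h0 /IH1 h1]; case: (x i).
- move=> /and4P[p0 p1 /IH0 /andP[a0 a1] /IH1 /andP[b0 b1]].
  apply/andP; split; first by rewrite addr_ge0 // mulr_ge0 // subr_ge0.
  have h1 := ler_wpM2l p0 a1.
  have h2 : (1 - p) * sdt_mean T1 x <= (1 - p) * 1 by rewrite ler_wpM2l // subr_ge0.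
  rewrite !mulr1 in h1 h2; apply: le_trans (lerD h1 h2) _; lra.
Qed.

Lemma det_mean n (D : sdt n) x : det D -> sdt_mean D x = (deval D x)%:R.
Proof.
elim: D => [b|i T0 IH0 T1 IH1|p T0 IH0 T1 IH1] //=.
by move=> /andP[/IH0 h0 /IH1 h1]; case: (x i).
Qed.

Lemma ler_sum_all X (P : pred X) (L : seq X) (F G : X -> R) :
  all P L -> (forall r, P r -> F r <= G r) ->
  \sum_(r <- L) F r <= \sum_(r <- L) G r.
Proof.
move=> hL h; elim: L hL => [|a L IH] /=; first by rewrite !big_nil.
by move=> /andP[/h ha /IH hl]; rewrite !big_cons lerD.
Qed.

Lemma min_ex X (P : pred X) (L : seq X) (h : X -> R) :
  all P L -> L <> [::] -> exists x, P x /\ all (fun y => h x <= h y) L.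
Proof.
elim: L => [|a L IH] //= /andP[Pa PL] _.
case: L IH PL => [|b L] IH PL.
  by exists a; rewrite /= lexx.
have [x [Px Hx]] := IH PL ltac:(by []).
have [hax|hxa] := leP (h a) (h x).
- exists a; split=> //; rewrite lexx /=.
  by apply: all_mono Hx => y; apply: le_trans.
- exists x; split=> //; rewrite Hx andbT; exact: ltW.
Qed.

Lemma exists_le_avg X (P : pred X) (L : seq X) (w h : X -> R) :
  all P L -> all (fun r => 0 <= w r) L -> \sum_(r <- L) w r = 1 ->
  exists r, P r /\ h r <= \sum_(r <- L) w r * h r.
Proof.
move=> PL wL s1.
have ne : L <> [::] by move=> E; move: s1; rewrite E big_nil => /eqP; rewrite eq_sym oner_eq0.
have [x [Px Hx]] := min_ex h PL ne.
exists x; split=> //.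
have -> : h x = \sum_(r <- L) w r * h x by rewrite -mulr_suml s1 mul1r.
apply: (@ler_sum_all _ (predI (fun r => 0 <= w r) (fun y => h x <= h y))).
  by rewrite all_predI wL Hx.
by move=> r /andP[w0 hr]; rewrite ler_wpM2l.
Qed.

Lemma sum_w_g n (T : sdt n) x :
  \sum_(r <- reals T) r.1 * (sdt_mean r.2 x - sdt_mean T x) = 0.
Proof.
transitivity (\sum_(r <- reals T) r.1 * sdt_mean r.2 x
              - (\sum_(r <- reals T) r.1) * sdt_mean T x).
  rewrite mulr_suml -sumrB; apply: eq_bigr => r _; ring.
by rewrite reals_sum mul1r reals_mean subrr.
Qed.

Lemma step_pt n (T : sdt n) x (S : R) : sdt_valid T ->
  \sum_(r <- reals T) r.1 * (sdt_mean r.2 x - sdt_mean T x + S) ^+ 2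
  <= S ^+ 2 + 1.
Proof.
move=> vT.
have hg := reals_good vT.
set m := sdt_mean T x.
have hm := mean_bounds x vT.
have -> : \sum_(r <- reals T) r.1 * (sdt_mean r.2 x - m + S) ^+ 2 =
  \sum_(r <- reals T) r.1 * (sdt_mean r.2 x - m) ^+ 2
  + 2 * S * \sum_(r <- reals T) r.1 * (sdt_mean r.2 x - m)
  + S ^+ 2 * \sum_(r <- reals T) r.1.
  rewrite !mulr_sumr -!big_split /=; apply: eq_bigr => r _; ring.
rewrite sum_w_g reals_sum mulr0 addr0 mulr1 addrC lerD2l.
rewrite -(reals_sum T).
apply: (ler_sum_all hg) => r /and3P[r0 r1 _].
rewrite -[X in _ <= X]mulr1; apply: ler_wpM2l => //.
rewrite det_mean //; case: (deval r.2 x) => /=; rewrite ?mulr1n ?mulr0n;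
  move: hm; rewrite /m => /andP[h0 h1]; nra.
Qed.

Lemma greedy n (T : sdt n) : sdt_valid T -> forall k : nat,
  exists Ds : seq (sdt n), [/\ size Ds = k,
    all (fun D => det D && leq (sdt_size D) (sdt_size T)) Ds &
    \sum_(x : {ffun 'I_n -> bool}) (\sum_(D <- Ds) (sdt_mean D x - sdt_mean T x)) ^+ 2
      <= k%:R * \sum_(x : {ffun 'I_n -> bool}) (1 : R)].
Proof.
move=> vT; elim=> [|k [Ds [sz hD hS]]].
  exists [::]; split=> //; rewrite mul0r; apply: sumr_le0 => x _.
  by rewrite big_nil expr0n /=.
set S := fun x => \sum_(D <- Ds) (sdt_mean D x - sdt_mean T x).
pose h := fun r : R * sdt n => \sum_(x : {ffun 'I_n -> bool})
   (sdt_mean r.2 x - sdt_mean T x + S x) ^+ 2.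
have wL : all (fun r : R * sdt n => 0 <= r.1) (reals T).
  by apply: all_mono (reals_good vT) => r /and3P[].
have [r [/and3P[r0 r1 r2] hr]] := exists_le_avg h (reals_good vT) wL (reals_sum T).
exists (r.2 :: Ds); split; first by rewrite /= sz.
  by rewrite /= r1 r2.
apply: le_trans _ (_ : h r <= _).
  by apply: ler_sum => x _; rewrite big_cons /S.
apply: (le_trans hr).
rewrite /h; under eq_bigr do rewrite mulr_sumr.
rewrite exchange_big /=.
apply: le_trans (_ : \sum_(x : {ffun 'I_n -> bool}) (S x ^+ 2 + 1) <= _).
  by apply: ler_sum => x _; apply: step_pt.
rewrite big_split /= -natr1 mulrDl mul1r lerD2r; exact: hS.
Qed.

Fixpoint graft n (D : sdt n) (f : bool -> sdt n) : sdt n :=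
  match D with
  | Leaf b => f b
  | DNode i a b => DNode i (graft a f) (graft b f)
  | SNode _ _ _ => D
  end.

Fixpoint build n (k : nat) (Ds : seq (sdt n)) (a : nat) : sdt n :=
  match Ds with
  | [::] => SNode (a%:R / k%:R) (Leaf true) (Leaf false)
  | D :: Ds' => graft D (fun b => build k Ds' (a + b))
  end.

Lemma graft_ok n (D : sdt n) f : det D ->
  (forall b, sdt_valid (f b) && stochastic_leaf (f b)) ->
  sdt_valid (graft D f) && stochastic_leaf (graft D f).
Proof.
elim: D => [b|i T0 IH0 T1 IH1|p T0 IH0 T1 IH1] //= dD hf.
move: dD => /andP[/IH0 /(_ hf) /andP[a1 a2] /IH1 /(_ hf) /andP[b1 b2]].
by rewrite a1 a2 b1 b2.
Qed.

Lemma graft_mean n (D : sdt n) f x : det D ->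
  sdt_mean (graft D f) x = sdt_mean (f (deval D x)) x.
Proof.
elim: D => [b|i T0 IH0 T1 IH1|p T0 IH0 T1 IH1] //= /andP[/IH0 h0 /IH1 h1].
by case: (x i).
Qed.

Lemma graft_size n (D : sdt n) f (M : nat) : det D -> (forall b, leq (sdt_size (f b)) M) ->
  leq (sdt_size (graft D f)) (sdt_size D * M).
Proof.
elim: D => [b|i T0 IH0 T1 IH1|p T0 IH0 T1 IH1] //= dD hf.
  by rewrite mul1n.
move: dD => /andP[/IH0 /(_ hf) h0 /IH1 /(_ hf) h1].
by rewrite mulnDl leq_add.
Qed.

Lemma build_ok n (k : nat) (Ds : seq (sdt n)) a : leq 1 k -> leq (a + size Ds) k -> all (@det n) Ds ->
  sdt_valid (build k Ds a) && stochastic_leaf (build k Ds a).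
Proof.
move=> k0; elim: Ds a => [|D Ds IH] a /=.
  rewrite addn0 => hak _; rewrite !andbT.
  have kp : (0 : R) < k%:R by rewrite ltr0n.
  have H1 : (0 : R) <= a%:R / k%:R by rewrite divr_ge0 ?ler0n.
  have H2 : (a%:R / k%:R : R) <= 1 by rewrite ler_pdivrMr // mul1r ler_nat.
  by apply/andP; split; [exact: H1 | exact: H2].
move=> hs /andP[dD dDs]; apply: graft_ok => // b; apply: IH => //.
case: b; rewrite /= ?addn1 ?addn0; first by rewrite addSnnS.
by apply: leq_trans hs; rewrite leq_add2l.
Qed.

Lemma build_mean n (k : nat) (Ds : seq (sdt n)) a x : all (@det n) Ds ->
  sdt_mean (build k Ds a) x = (a%:R + \sum_(D <- Ds) ((deval D x : nat)%:R : R)) / k%:R.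
Proof.
elim: Ds a => [|D Ds IH] a /=.
  move=> _; rewrite big_nil addr0 /=.
  have E : forall y : R, y * 1 + (1 - y) * 0 = y by move=> y; ring.
  exact: E.
move=> /andP[dD dDs]; rewrite graft_mean // IH // big_cons natrD addrA; reflexivity.
Qed.

Lemma build_size n (k : nat) (Ds : seq (sdt n)) a : all (@det n) Ds ->
  leq (sdt_size (build k Ds a)) (2 * \prod_(D <- Ds) sdt_size D).
Proof.
elim: Ds a => [|D Ds IH] a /=; first by rewrite big_nil.
move=> /andP[dD dDs]; rewrite big_cons mulnCA.
by apply: graft_size => // b; apply: IH.
Qed.

Lemma prod_le n (Ds : seq (sdt n)) (s : nat) : all (fun D => leq (sdt_size D) s) Ds ->
  leq (\prod_(D <- Ds) sdt_size D) (expn s (size Ds)).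
Proof.
elim: Ds => [|D Ds IH] /=; first by rewrite big_nil.
by move=> /andP[h1 h2]; rewrite big_cons expnS leq_mul // IH.
Qed.

Lemma sum_shift n (Ds : seq (sdt n)) (m : R) x : all (@det n) Ds ->
  \sum_(D <- Ds) (sdt_mean D x - m) =
  \sum_(D <- Ds) ((deval D x : nat)%:R : R) - (size Ds)%:R * m.
Proof.
elim: Ds => [|D Ds IH] /=; first by rewrite !big_nil mul0r subr0.
move=> /andP[dD dDs]; rewrite !big_cons IH // det_mean // -addn1 natrD; ring.
Qed.

Lemma cardN n : \sum_(x : {ffun 'I_n -> bool}) (1 : R) = 2 ^+ n.
Proof. by rewrite sumr_const card_ffun card_bool card_ord natrX. Qed.

Lemma size_pos n (T : sdt n) : leq 1 (sdt_size T).
Proof.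
elim: T => //= [i T0 IH0 T1 IH1|p T0 IH0 T1 IH1]; exact: leq_trans IH0 (leq_addr _ _).
Qed.

Lemma size_nl n (T : sdt n) : ~~ is_leaf T -> leq 2 (sdt_size T).
Proof.
case: T => //= [i T0 T1|p T0 T1] _;
by rewrite -(addn1 1) leq_add // size_pos.
Qed.

Theorem lemma4 :
  exists c : R, 0 < c /\
  forall (n : nat) (T : sdt n), sdt_valid T ->
  forall eps : R, 0 < eps -> eps < 2^-1 ->
  exists Tbar : sdt n,
    [/\ sdt_valid Tbar, stochastic_leaf Tbar,
        (sdt_size Tbar)%:R <= (sdt_size T)%:R `^ (c / eps ^+ 2)
      & mean_dist T Tbar <= eps].
Proof.
exists 2; split; first by rewrite ltr0n.
move=> n T vT eps e0 e1.
case lT: (is_leaf T).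
  exists T; split => //.
  - by case: T vT lT.
  - case: T vT lT => //= b _ _; rewrite powR1; exact: lexx.
  - have H : (2 ^+ n)^-1 * \sum_(x : {ffun 'I_n -> bool}) `|sdt_mean T x - sdt_mean T x| <= eps.
      by rewrite big1 ?mulr0 ?ltW // => x _; rewrite subrr normr0.
    exact: H.
have s2 := size_nl (negbT lT).
set s := sdt_size T in s2 *.
set t := (eps ^+ 2)^-1.
have e2 : eps ^+ 2 < 4^-1 by rewrite expr2; nra.
have e2p : 0 < eps ^+ 2 by rewrite exprn_gt0.
have te : t * eps ^+ 2 = 1 by rewrite mulVf // gt_eqF.
have t4 : 4 < t by nra.
set k := (Num.trunc t).+1.
have kt1 : t < k%:R by exact: truncnS_gt.
have kt2 : k%:R <= t + 1.
  rewrite /k -addn1 natrD lerD2r truncn_le; lra.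
have k1 : leq 1 k by [].
have [Ds [sz hD hS]] := greedy vT k.
have dDs : all (@det n) Ds by apply: all_mono hD => D /andP[].
have sDs : all (fun D => leq (sdt_size D) s) Ds by apply: all_mono hD => D /andP[].
exists (build k Ds 0).
have /andP[v1 v2] := build_ok (a:=0) k1 (eq_leq sz) dDs.
split => //.
-
  have h1 : leq (sdt_size (build k Ds 0)) (expn s k.+1).
    apply: leq_trans (build_size k 0 dDs) _.
    rewrite expnS; apply: leq_mul => //.
    by rewrite -sz; exact: prod_le.
  have s1 : (1 : R) <= s%:R by rewrite ler1n; exact: leq_trans s2.
  apply: le_trans (_ : (expn s k.+1)%:R <= _); first by rewrite ler_nat.
  rewrite natrX -powR_mulrn; last exact: le_trans s1.
  apply: ler_powR => //.
  rewrite /t in kt2 *; rewrite -natr1; lra.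
-
  set S := fun x => \sum_(D <- Ds) (sdt_mean D x - sdt_mean T x).
  set N := \sum_(x : {ffun 'I_n -> bool}) (1 : R).
  have kp : (0 : R) < k%:R by rewrite ltr0n.
  have E : forall x, `|sdt_mean T x - sdt_mean (build k Ds 0) x| = `|S x| / k%:R.
    move=> x; rewrite build_mean // /S sum_shift // sz add0r.
    set A := \sum_(D <- Ds) _.
    have -> : sdt_mean T x - A / k%:R = - ((A - k%:R * sdt_mean T x) / k%:R).
      by field; rewrite gt_eqF.
    by rewrite normrN normf_div (ger0_norm (ler0n _ _)).
  have P : forall x, 2 * eps * k%:R * `|S x| <= S x ^+ 2 + eps ^+ 2 * k%:R ^+ 2.
    move=> x; rewrite -(real_normK (num_real (S x))).
    have := sqr_ge0 (`|S x| - eps * k%:R); nra.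
  have N0 : 0 <= N by rewrite /N cardN exprn_ge0.
  have Q : 2 * eps * k%:R * \sum_x `|S x| <= 2 * eps * k%:R * (eps * k%:R * N).
    rewrite mulr_sumr.
    apply: le_trans (_ : \sum_x (S x ^+ 2 + eps ^+ 2 * k%:R ^+ 2) <= _).
      by apply: ler_sum => x _; exact: P.
    rewrite big_split /=.
    have -> : \sum_(x : {ffun 'I_n -> bool}) eps ^+ 2 * k%:R ^+ 2 = eps ^+ 2 * k%:R ^+ 2 * N.
      by rewrite /N mulr_sumr; apply: eq_bigr => x _; rewrite mulr1.
    have hS' : \sum_(x : {ffun 'I_n -> bool}) S x ^+ 2 <= k%:R * N by exact: hS.
    have h1 : 1 <= k%:R * eps ^+ 2 by rewrite -[X in X <= _]te ler_pM2r // ltW.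
    have h2 : k%:R * N <= k%:R * N * (k%:R * eps ^+ 2) by rewrite ler_peMr // mulr_ge0 // ltW.
    have -> : 2 * eps * k%:R * (eps * k%:R * N) = k%:R * N * (k%:R * eps ^+ 2) + eps ^+ 2 * k%:R ^+ 2 * N by ring.
    by rewrite lerD2r (le_trans hS').
  have Q2 : \sum_x `|S x| <= eps * k%:R * N.
    by rewrite -(ler_pM2l (_ : 0 < 2 * eps * k%:R)) // !mulr_gt0.
  have Hs : \sum_x `|sdt_mean T x - sdt_mean (build k Ds 0) x| <= eps * N.
    under eq_bigr do rewrite E.
    rewrite -mulr_suml ler_pdivrMr //; nra.
  have NN : N = 2 ^+ n by rewrite /N cardN.
  have H : (2 ^+ n)^-1 * \sum_x `|sdt_mean T x - sdt_mean (build k Ds 0) x| <= eps.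
    rewrite -NN; rewrite -(ler_pM2l (_ : 0 < N)); last by rewrite NN exprn_gt0.
    rewrite mulrA mulfV; last by rewrite gt_eqF // NN exprn_gt0.
    by rewrite mul1r mulrC.
  exact: H.
Qed.
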